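(* Let $\alpha\in(0,1)$, and let $\mathcal E=(N,\{a_1,a_2\},\vec\sigma)$ be an election with two alternatives. Partition $N$ into four sets according to the agents' preferences: $N_1$ ($a_1\succ a_2$), $N_2$ ($a_2\succ a_1$), $N_3$ ($a_1\succ\!\!\succ a_2$) and $N_4$ ($a_2\succ\!\!\succ a_1$). Define two placements on the real line, each with distance $d(x,y)=|x-y|$. - Placement $d_1$: $a_1$ at $0$; $N_3$ at $2$; $N_1$ at $\frac1\alpha+1$; $N_2$ at $\frac2\alpha$; $a_2$ and $N_4$ at $\frac2\alpha+2$. - Placement $d_2$: $a_1$ at $0$; $N_3$ at $2$; $N_1$ at $\frac1\alpha+1$; $a_2$ and $N_4$ at $\frac2\alpha+2$; $N_2$ at $\frac2\alpha+2+\frac{2\alpha+2}{1-\alpha}$. Then, for the distortion restricted to 1-Euclidean metrics, $$\mathsf{dist}_\alpha(a_1,\mathcal E)=\max\left(\frac{\mathrm{sc}_{d_1}(a_1)}{\mathrm{sc}_{d_1}(a_2)},\ \frac{\mathrm{sc}_{d_2}(a_1)}{\mathrm{sc}_{d_2}(a_2)},\ 1\right).$$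
   Context: Each agent $i$ reports $\sigma_i=(\pi_i,\Join_i)$, a ranking of the two alternatives together with $\Join_i(1)\in\{\succ,\succ\!\!\succ\}$. The profile is $\alpha$-consistent with $d$ (mandatory elicitation) if: - whenever agent $i$ reports $x\succ y$, we have $d(i,y)\ge d(i,x)>\alpha d(i,y)$; - whenever agent $i$ reports $x\succ\!\!\succ y$, we have $d(i,x)\le\alpha d(i,y)$. Here $\mathrm{sc}_d(a)=\sum_{i\in N}d(i,a)$. The 1-Euclidean distortion is $\mathsf{dist}_\alpha(a,\mathcal E)=\sup_d \mathrm{sc}_d(a)/\min_b\mathrm{sc}_d(b)$, where the supremum ranges over metrics $d(x,y)=|x-y|$ induced by placing all agents and alternatives on $\mathbb R$ with which the profile is $\alpha$-consistent. A ratio with zero denominator and positive numerator is read as $+\infty$. *)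

(* Defs.v *)
From HB Require Import structures.
From mathcomp Require Import all_boot all_order all_algebra.
From mathcomp Require Import all_classical all_reals.
From mathcomp Require Import ereal.
Set Implicit Arguments. Unset Strict Implicit. Unset Printing Implicit Defensive.
Import Order.TTheory GRing.Theory Num.Theory.
Local Open Scope ring_scope.

Inductive alt := A1 | A2.
Definition other (a : alt) : alt := match a with A1 => A2 | A2 => A1 end.

(* Strength of a reported comparison: x ≻ y (Weak) or x ≻≻ y (Strong). *)
Inductive strength := Weak | Strong.

(* A report sigma_i = (pi_i, ⋈_i(1)): with two alternatives the ranking pi_i is
   determined by its top alternative [top]; [str] is ⋈_i(1). *)
Record report := Report { top : alt ; str : strength }.

Section Defs.
Variable R : realType.

Definition dist_ag (n : nat) (p : 'I_n -> R) (q : alt -> R) (i : 'I_n) (a : alt) : R :=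
  `|p i - q a|.

Definition consistent (n : nat) (alpha : R) (sigma : 'I_n -> report)
    (p : 'I_n -> R) (q : alt -> R) : Prop :=
  forall i : 'I_n,
    let x := top (sigma i) in
    let y := other x in
    match str (sigma i) with
    | Weak => dist_ag p q i y >= dist_ag p q i x /\ dist_ag p q i x > alpha * dist_ag p q i y
    | Strong => dist_ag p q i x <= alpha * dist_ag p q i y
    end.

Definition sc (n : nat) (p : 'I_n -> R) (q : alt -> R) (a : alt) : R :=
  \sum_(i < n) dist_ag p q i a.

(* Ratio x / y as an extended real: positive / 0 = +oo; 0 / 0 = 1. *)
Definition eratio (x y : R) : \bar R :=
  if y == 0 then (if x == 0 then 1%E else +oo%E) else (x / y)%:E.

Definition dist_euclid (n : nat) (alpha : R) (sigma : 'I_n -> report) (a : alt) : \bar R :=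
  ereal_sup [set r : \bar R | exists (p : 'I_n -> R) (q : alt -> R),
      consistent alpha sigma p q /\
      r = eratio (sc p q a) (Num.min (sc p q A1) (sc p q A2))].

(* Placement d_1. Groups: N1 = (A1,Weak), N2 = (A2,Weak), N3 = (A1,Strong),
   N4 = (A2,Strong). *)
Definition q1 (alpha : R) (a : alt) : R :=
  match a with A1 => 0 | A2 => 2 / alpha + 2 end.
Definition p1 (n : nat) (alpha : R) (sigma : 'I_n -> report) (i : 'I_n) : R :=
  match top (sigma i), str (sigma i) with
  | A1, Weak => 1 / alpha + 1
  | A2, Weak => 2 / alpha
  | A1, Strong => 2
  | A2, Strong => 2 / alpha + 2
  end.

Definition q2 (alpha : R) (a : alt) : R :=
  match a with A1 => 0 | A2 => 2 / alpha + 2 end.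
Definition p2 (n : nat) (alpha : R) (sigma : 'I_n -> report) (i : 'I_n) : R :=
  match top (sigma i), str (sigma i) with
  | A1, Weak => 1 / alpha + 1
  | A2, Weak => 2 / alpha + 2 + (2 * alpha + 2) / (1 - alpha)
  | A1, Strong => 2
  | A2, Strong => 2 / alpha + 2
  end.

End Defs.

(* Main.v *)
Require Import Defs.
From HB Require Import structures.
From mathcomp Require Import all_boot all_order all_algebra.
From mathcomp Require Import all_classical all_reals.
From mathcomp Require Import ereal.
From mathcomp Require Import ring lra.
Import Order.TTheory GRing.Theory Num.Theory.
Local Open Scope ring_scope.

Section Arith.
Variable R : realType.
Implicit Types a u c l x z s : R.

Definition T3 (x z E : R) := x + z = E \/ x - z = E \/ z - x = E.

Lemma line3 (p a b : R) : T3 `|p - a| `|p - b| `|a - b|.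
Proof.
rewrite /T3.
have [h1|h1] := lerP 0 (p - a); have [h2|h2] := lerP 0 (p - b);
  have [h3|h3] := lerP 0 (a - b);
  rewrite ?(ger0_norm h1) ?(ltr0_norm h1) ?(ger0_norm h2) ?(ltr0_norm h2)
    ?(ger0_norm h3) ?(ltr0_norm h3); lra.
Qed.

Lemma L1 a u l x z s : 0 < a -> a < 1 -> a * u = 1 -> 1 < u -> 1 <= l ->
  0 <= x -> x <= z -> 0 < s -> T3 x z (s * (2 * u + 2)) ->
  x - l * z <= s * ((u + 1) - l * (u + 1)).
Proof.
move=> a0 a1 au u1 l1 x0 xz s0 T.
have E0 : 0 < s * (2 * u + 2) by apply: mulr_gt0; lra.
have hE : s * (2 * u + 2) <= x + z by case: T => [|[]]; lra.
have : 0 <= (l - 1) * (z - s * (u + 1)) by apply: mulr_ge0; lra.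
lra.
Qed.

Lemma L3 a u l x z s : 0 < a -> a < 1 -> a * u = 1 -> 1 < u -> 1 <= l ->
  0 <= x -> 0 <= z -> x <= a * z -> 0 < s -> T3 x z (s * (2 * u + 2)) ->
  x - l * z <= s * (2 - l * (2 * u)).
Proof.
move=> a0 a1 au u1 l1 x0 z0 xz s0 T.
have E0 : 0 < s * (2 * u + 2) by apply: mulr_gt0; lra.
have az : a * z <= z.
  have : 0 <= (1 - a) * z by apply: mulr_ge0; lra.
  lra.
have hE : s * (2 * u + 2) <= x + z by case: T => [|[]]; lra.
have h : a * u * s = s by rewrite au mul1r.
have : (1 + a) * (2 * u * s) <= (1 + a) * z by lra.
rewrite ler_pM2l; last lra. move=> hz.
have : 0 <= (l - a) * (z - 2 * u * s) by apply: mulr_ge0; lra.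
lra.
Qed.

Lemma L4 u l x z s : 1 < u -> 1 <= l -> 0 <= x -> 0 <= z -> 0 < s ->
  T3 x z (s * (2 * u + 2)) -> x - l * z <= s * ((2 * u + 2) - l * 0).
Proof.
move=> u1 l1 x0 z0 s0 T.
have E0 : 0 < s * (2 * u + 2) by apply: mulr_gt0; lra.
have hE : x <= z + s * (2 * u + 2) by case: T => [|[]]; lra.
have : 0 <= (l - 1) * z by apply: mulr_ge0; lra.
lra.
Qed.

Lemma L2 a u c l x z s : 0 < a -> a < 1 -> a * u = 1 -> 1 < u -> 1 <= l ->
  c * (1 - a) = 2 * a + 2 ->
  0 <= x -> 0 <= z -> z <= x -> a * x < z -> 0 < s -> T3 x z (s * (2 * u + 2)) ->
  x - l * z <= s * (2 * u - l * 2) \/ x - l * z <= s * ((2 * u + 2 + c) - l * c).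
Proof.
move=> a0 a1 au u1 l1 cE x0 z0 zx axz s0 T.
have E0 : 0 < s * (2 * u + 2) by apply: mulr_gt0; lra.
have h : a * u * s = s by rewrite au mul1r.
case: T => [T|[T|T]]; last lra.
- left.
  have : (1 + a) * x <= (1 + a) * (2 * u * s) by lra.
  rewrite ler_pM2l; last lra. move=> hx.
  have : 0 <= (1 + l) * (2 * u * s - x) by apply: mulr_ge0; lra.
  have : l * (x + z) = l * (s * (2 * u + 2)) by rewrite T.
  lra.
- right.
  have hc : c * (1 - a) * s = (2 * a + 2) * s by rewrite cE.
  have hT : a * (x - z) = a * (s * (2 * u + 2)) by rewrite T.
  have : (1 - a) * (s * c) <= (1 - a) * z by lra.
  rewrite ler_pM2l; last lra. move=> hz.
  have : 0 <= (l - 1) * (z - s * c) by apply: mulr_ge0; lra.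
  lra.
Qed.
End Arith.
Arguments line3 {R}. Arguments L1 {R}. Arguments L2 {R}. Arguments L3 {R}. Arguments L4 {R}.

Section Main.
Variable R : realType.
Variables (n : nat) (alpha : R) (sigma : 'I_n -> report).
Hypothesis a0 : 0 < alpha.
Hypothesis a1 : alpha < 1.
Ltac lr := let h0 := fresh "h0" in let h1 := fresh "h1" in
  have h0 := a0; have h1 := a1; lra.

Definition u := 1 / alpha.
Definition c := (2 * alpha + 2) / (1 - alpha).

Lemma au : alpha * u = 1.
Proof. by rewrite /u mul1r mulfV // gt_eqF. Qed.
Lemma u1 : 1 < u.
Proof. by rewrite /u ltr_pdivlMr // mul1r. Qed.
Lemma cE : c * (1 - alpha) = 2 * alpha + 2.
Proof. by rewrite /c mulfVK // subr_eq0 eq_sym lt_eqF. Qed.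
Lemma c0 : 0 < c.
Proof. rewrite /c; apply: divr_gt0. all: lr. Qed.
Lemma two_u : 2 / alpha = 2 * u.
Proof. by rewrite /u mul1r. Qed.

Definition grp (i : 'I_n) := (top (sigma i), str (sigma i)).

Definition fA1 (b : bool) (i : 'I_n) : R :=
  match top (sigma i), str (sigma i) with
  | A1, Weak => u + 1
  | A2, Weak => if b then 2 * u else 2 * u + 2 + c
  | A1, Strong => 2
  | A2, Strong => 2 * u + 2
  end.
Definition fA2 (b : bool) (i : 'I_n) : R :=
  match top (sigma i), str (sigma i) with
  | A1, Weak => u + 1
  | A2, Weak => if b then 2 else c
  | A1, Strong => 2 * u
  | A2, Strong => 0
  end.
Definition ind (i : 'I_n) : R :=
  match top (sigma i), str (sigma i) with
  | A2, Weak => 1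
  | _, _ => 0
  end.

Definition pf (b : bool) (s : R) (i : 'I_n) : R :=
  match top (sigma i), str (sigma i) with
  | A1, Weak => 1 / alpha + 1
  | A2, Weak => if b then 2 / alpha - s
                else 2 / alpha + 2 + (2 * alpha + 2) / (1 - alpha) + s
  | A1, Strong => 2
  | A2, Strong => 2 / alpha + 2
  end.

Lemma nrmE (x y : R) : (x = y \/ x = - y) -> 0 <= y -> `|x| = y.
Proof. by case=> -> /ger0_norm; rewrite ?normrN. Qed.

Lemma p1A1 i : dist_ag (p1 alpha sigma) (q1 alpha) i A1 = fA1 true i.
Proof.
have := u1; rewrite /dist_ag /p1 /q1 /fA1 two_u -/u.
case: (sigma i) => t st; case: t; case: st => /= h; (apply: nrmE; [first [left; lr | right; lr] | lr]).
Qed.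
Lemma p1A2 i : dist_ag (p1 alpha sigma) (q1 alpha) i A2 = fA2 true i.
Proof.
have := u1; rewrite /dist_ag /p1 /q1 /fA2 two_u -/u.
case: (sigma i) => t st; case: t; case: st => /= h; (apply: nrmE; [first [left; lr | right; lr] | lr]).
Qed.
Lemma p2A1 i : dist_ag (p2 alpha sigma) (q2 alpha) i A1 = fA1 false i.
Proof.
have := u1; have := c0; rewrite /dist_ag /p2 /q2 /fA1 two_u -/u -/c.
case: (sigma i) => t st; case: t; case: st => /= h h'; (apply: nrmE; [first [left; lr | right; lr] | lr]).
Qed.
Lemma p2A2 i : dist_ag (p2 alpha sigma) (q2 alpha) i A2 = fA2 false i.
Proof.
have := u1; have := c0; rewrite /dist_ag /p2 /q2 /fA2 two_u -/u -/c.
case: (sigma i) => t st; case: t; case: st => /= h h'; (apply: nrmE; [first [left; lr | right; lr] | lr]).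
Qed.

Definition sb (b : bool) (s : R) := if b then - s else s.

Lemma pfA1 b s i : 0 <= s <= u - 1 ->
  dist_ag (pf b s) (q1 alpha) i A1 = fA1 b i + sb b s * ind i.
Proof.
move=> hs; have := u1; have := c0; rewrite /dist_ag /pf /q1 /fA1 /ind /sb two_u -/u -/c.
case: (sigma i) => t st; case: t; case: st; case: b => /= h h'; (apply: nrmE; [first [left; lr | right; lr] | lr]).
Qed.
Lemma pfA2 b s i : 0 <= s <= u - 1 ->
  dist_ag (pf b s) (q1 alpha) i A2 = fA2 b i + s * ind i.
Proof.
move=> hs; have := u1; have := c0; rewrite /dist_ag /pf /q1 /fA2 /ind two_u -/u -/c.
case: (sigma i) => t st; case: t; case: st; case: b => /= h h'; (apply: nrmE; [first [left; lr | right; lr] | lr]).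
Qed.


Definition k := \sum_(i < n) ind i.
Definition F b := \sum_(i < n) fA1 b i.
Definition G b := \sum_(i < n) fA2 b i.

Lemma scp1A1 : sc (p1 alpha sigma) (q1 alpha) A1 = F true.
Proof. by apply: eq_bigr => i _; rewrite p1A1. Qed.
Lemma scp1A2 : sc (p1 alpha sigma) (q1 alpha) A2 = G true.
Proof. by apply: eq_bigr => i _; rewrite p1A2. Qed.
Lemma scp2A1 : sc (p2 alpha sigma) (q2 alpha) A1 = F false.
Proof. by apply: eq_bigr => i _; rewrite p2A1. Qed.
Lemma scp2A2 : sc (p2 alpha sigma) (q2 alpha) A2 = G false.
Proof. by apply: eq_bigr => i _; rewrite p2A2. Qed.

Lemma scpfA1 b s : 0 <= s <= u - 1 -> sc (pf b s) (q1 alpha) A1 = F b + sb b s * k.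
Proof.
move=> hs; rewrite /sc (eq_bigr _ (fun i _ => pfA1 b s i hs)) big_split /=.
by rewrite /F /k mulr_sumr.
Qed.
Lemma scpfA2 b s : 0 <= s <= u - 1 -> sc (pf b s) (q1 alpha) A2 = G b + s * k.
Proof.
move=> hs; rewrite /sc (eq_bigr _ (fun i _ => pfA2 b s i hs)) big_split /=.
by rewrite /G /k mulr_sumr.
Qed.

Lemma pf_cons b s : 0 < s <= u - 1 -> consistent alpha sigma (pf b s) (q1 alpha).
Proof.
move=> hs i /=.
have hs' : 0 <= s <= u - 1 by lr.
have h1 := au; have h2 := cE; have h5 := u1; have h6 := c0.
have h3 : 0 < alpha * s by apply: mulr_gt0; lr.
have h4 : 0 < s * (1 - alpha) by apply: mulr_gt0; lr.
have h7 : alpha * c + (2 * alpha + 2) = c by rewrite -h2; ring.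
case E: (sigma i) => [t st]; case: t E; case: st => E /=;
  rewrite ?pfA1 // ?pfA2 // /fA1 /fA2 /ind /sb E /=; case: b => /=; try split; lr.
Qed.

Lemma agent_ub p q (hc : consistent alpha sigma p q) (l s : R) i :
  1 <= l -> 0 < s -> `|q A1 - q A2| = s * (2 * u + 2) ->
  dist_ag p q i A1 - l * dist_ag p q i A2 <=
  s * (fA1 (2 * u + 2 + c - l * c <= 2 * u - l * 2) i
       - l * fA2 (2 * u + 2 + c - l * c <= 2 * u - l * 2) i).
Proof.
move=> l1 s0 E.
have T := line3 (p i) (q A1) (q A2); rewrite E in T.
have hci := hc i.
have h1 := au; have h2 := cE; have h5 := u1; have h6 := c0.
have x0 : 0 <= `|p i - q A1| by [].
have z0 : 0 <= `|p i - q A2| by [].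
move: hci T x0 z0; rewrite /dist_ag /fA1 /fA2.
case: (sigma i) => t st; case: t; case: st => /= hci T x0 z0.
- case: hci => hzx hxz. exact: (L1 _ _ _ _ _ _ a0 a1 h1 h5 l1 x0 hzx s0 T).
- exact: (L3 _ _ _ _ _ _ a0 a1 h1 h5 l1 x0 z0 hci s0 T).
- case: hci => hzx hxz.
  have [L|L] := L2 _ _ _ _ _ _ _ a0 a1 h1 h5 l1 h2 x0 z0 hzx hxz s0 T;
  case: (leP (2 * u + 2 + c - l * c) (2 * u - l * 2)) => hb.
  + exact: L.
  + have := ler_wpM2l (ltW s0) (ltW hb). lra.
  + have := ler_wpM2l (ltW s0) hb. lra.
  + exact: L.
- have := L4 _ _ _ _ _ h5 l1 x0 z0 s0 T. by [].
Qed.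


Lemma npos (f : 'I_n -> R) : 0 < \sum_(i < n) f i -> (0 < n)%N.
Proof.
case: (posnP n) => [n0|//]; rewrite big1 ?ltxx // => i _.
exfalso; have := ltn_ord i; move: (nat_of_ord i) => m; by rewrite n0.
Qed.

Lemma sc_ge0 (p : 'I_n -> R) q a : 0 <= sc p q a.
Proof. by apply: sumr_ge0 => i _; exact: normr_ge0. Qed.

Definition RHS := Order.max (eratio (F true) (G true))
  (Order.max (eratio (F false) (G false)) 1%E).

Lemma fsum_ge b i : 2 * u + 2 <= fA1 b i + fA2 b i.
Proof.
have h6 := c0; rewrite /fA1 /fA2.
by case: (sigma i) => t st; case: t; case: st; case: b => /=; lr.
Qed.
Lemma fA2_ge0 b i : 0 <= fA2 b i.
Proof.
have h6 := c0; have h5 := u1; rewrite /fA2.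
by case: (sigma i) => t st; case: t; case: st; case: b => /=; lr.
Qed.
Lemma fA1_ge0 b i : 0 <= fA1 b i.
Proof.
have h6 := c0; have h5 := u1; rewrite /fA1.
by case: (sigma i) => t st; case: t; case: st; case: b => /=; lr.
Qed.

Lemma FG_pos b : (0 < n)%N -> 0 < F b + G b.
Proof.
move=> n0; have h5 := u1.
have : \sum_(i < n) (2 * u + 2) <= F b + G b.
  by rewrite /F /G -big_split /=; apply: ler_sum => i _; exact: fsum_ge.
rewrite sumr_const card_ord => h; apply: lt_le_trans h.
by rewrite mulrn_wgt0 //; lr.
Qed.

Lemma one_le_RHS : (1 <= RHS)%E.
Proof. by rewrite /RHS le_max; apply/orP; right; rewrite le_max lexx orbT. Qed.

Lemma ub p q (hc : consistent alpha sigma p q) :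
  (eratio (sc p q A1) (Num.min (sc p q A1) (sc p q A2)) <= RHS)%E.
Proof.
have X0 := sc_ge0 p q A1; have Z0 := sc_ge0 p q A2.
set X := sc p q A1 in X0 *; set Z := sc p q A2 in Z0 *.
have [hXZ|hZX] := leP X Z.
  apply: le_trans one_le_RHS.
  rewrite /eratio; case: eqP => [_|hX]; rewrite ?lexx //.
  by rewrite mulfV ?lexx //; apply/eqP.

have qne : q A1 != q A2.
  by apply/eqP => e; move: hZX; rewrite /X /Z /sc /dist_ag e ltxx.
have E0 : 0 < `|q A1 - q A2| by rewrite normr_gt0 subr_eq0.
have h5 := u1.
set s := `|q A1 - q A2| / (2 * u + 2).
have s0 : 0 < s by apply: divr_gt0 => //; lr.
have sE : `|q A1 - q A2| = s * (2 * u + 2).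
  by rewrite /s divfK // gt_eqF //; lr.
have [Zz|Znz] := eqVneq Z 0.
  have zi : forall i, dist_ag p q i A2 = 0.
    move=> i; apply: (psumr_eq0P _ Zz) => // j _; exact: normr_ge0.
  have xi : forall i, dist_ag p q i A1 = `|q A1 - q A2| /\ grp i = (A2, Strong).
    move=> i.
    have T := line3 (p i) (q A1) (q A2).
    have hci := hc i.
    have x0 : 0 <= `|p i - q A1| by [].
    have ha := a0.
    move: hci T x0 (zi i); rewrite /dist_ag /grp.
    case: (sigma i) => t st; case: t; case: st => /= hci T x0 zi0; rewrite zi0 in hci T.
    - exfalso; case: hci => ??; lr.
    - exfalso; rewrite mulr0 in hci. case: T => [|[]]; lr.
    - exfalso; case: hci => ? h; have : 0 <= alpha * `|p i - q A1| by apply: mulr_ge0; lr.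
      lr.
    - split=> //. case: T => [|[]]; lr.
  have Xpos : 0 < X by rewrite -Zz.
  have n0 : (0 < n)%N := npos _ Xpos.
  have Gz : G true = 0.
    rewrite /G big1 // => i _; rewrite /fA2; have [_] := xi i; rewrite /grp.
    by case: (sigma i) => t st /= [-> ->].
  have Fpos : 0 < F true by have := FG_pos true n0; rewrite Gz addr0.
  rewrite /RHS le_max; apply/orP; left.
  by rewrite /eratio Gz eqxx (gt_eqF Fpos); apply: leey.
have Zpos : 0 < Z by rewrite lt_def Znz Z0.
set l := X / Z.
have l1 : 1 <= l by rewrite /l ler_pdivlMr // mul1r ltW.
have lZ : l * Z = X by rewrite /l divfK.
set b := (2 * u + 2 + c - l * c <= 2 * u - l * 2).
have key : X - l * Z <= s * (F b - l * G b).
  have e1 : X - l * Z = \sum_(i < n) (dist_ag p q i A1 - l * dist_ag p q i A2).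
    by rewrite sumrB -mulr_sumr.
  have e2 : s * (F b - l * G b) = \sum_(i < n) (s * (fA1 b i - l * fA2 b i)).
    by rewrite -mulr_sumr sumrB -mulr_sumr.
  rewrite e1 e2; apply: ler_sum => i _; exact: agent_ub.
rewrite lZ subrr pmulr_rge0 // subr_ge0 in key.
have n0 : (0 < n)%N := npos _ Zpos.
have FG := FG_pos b n0.
have G0 : 0 <= G b by apply: sumr_ge0 => i _; exact: fA2_ge0.
have hR : (eratio (F b) (G b) <= RHS)%E.
  by rewrite /RHS; case: (b); rewrite !le_max lexx ?orbT.
apply: le_trans hR.
rewrite /eratio (negbTE Znz) -/l.
have [Gz|Gnz] := eqVneq (G b) 0.
  by rewrite gt_eqF ?leey //; move: FG; rewrite Gz addr0.
have Gpos : 0 < G b by rewrite lt_def Gnz G0.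
by rewrite lee_fin ler_pdivlMr.
Qed.


Lemma approx (S : set (\bar R)) (Y : \bar R) :
  (forall r : R, (r%:E < Y)%E -> (r%:E <= ereal_sup S)%E) -> (Y <= ereal_sup S)%E.
Proof.
move=> H; rewrite leNgt; apply/negP => lt.
move: lt H; case: Y => [y| |]; case: (ereal_sup S) => [t| |] //= lt H.
- rewrite lte_fin in lt.
  have h := H ((t + y) / 2); rewrite !lte_fin lee_fin in h.
  have : (t + y) / 2 < y by lra.
  move/h; lra.
- have h := H (y - 1); rewrite lte_fin in h.
  have : y - 1 < y by lra.
  by move/h; rewrite leNgt ltNyr.
- have h := H (t + 1); rewrite ltry lee_fin in h.
  have := h isT; lra.
- have h := H 0; rewrite ltry in h.
  by have := h isT; rewrite leNgt ltNyr.
Qed.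


Lemma ratio_ge1 (x y : R) : 0 <= x -> 0 <= y -> (1 <= eratio x (Num.min x y))%E.
Proof.
move=> x0 y0; have [hxy|hyx] := leP x y.
  rewrite /eratio; case: eqP => [_|hx]; rewrite ?lexx //.
  by rewrite mulfV ?lexx //; apply/eqP.
rewrite /eratio; have [yz|ynz] := eqVneq y 0.
  by rewrite gt_eqF ?leey // -yz.
have ypos : 0 < y by rewrite lt_def ynz y0.
by rewrite lee_fin ler_pdivlMr // mul1r ltW.
Qed.

Lemma lb_one : (1 <= dist_euclid alpha sigma A1)%E.
Proof.
have h5 := u1.
apply: le_ereal_sup_tmp.
exists (eratio (sc (pf false (u - 1)) (q1 alpha) A1)
  (Num.min (sc (pf false (u - 1)) (q1 alpha) A1) (sc (pf false (u - 1)) (q1 alpha) A2))).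
  exists (pf false (u - 1)), (q1 alpha); split => //; apply: pf_cons; lr.
exact: ratio_ge1 (sc_ge0 _ _ _) (sc_ge0 _ _ _).
Qed.

Definition mb (b : bool) : R := if b then 2 else c.

Lemma kG b : mb b * k <= G b.
Proof.
rewrite /k mulr_sumr /G; apply: ler_sum => i _.
have h6 := c0; have h5 := u1; rewrite /mb /ind /fA2.
by case: (sigma i) => t st; case: t; case: st; case: b => /=; lr.
Qed.

Lemma k_ge0 : 0 <= k.
Proof.
apply: sumr_ge0 => i _; rewrite /ind.
by case: (sigma i) => t st; case: t; case: st.
Qed.

Lemma lb_b b : (eratio (F b) (G b) <= dist_euclid alpha sigma A1)%E.
Proof.
apply: approx => r hr.
have [hr1|hr1] := ltP r 1.
  by apply: le_trans lb_one; rewrite lee_fin ltW.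
have h5 := u1; have h6 := c0; have k0 := k_ge0; have hkG := kG b.
have mb0 : 0 < mb b by rewrite /mb; case: (b); lr.
have F0 : 0 <= F b by apply: sumr_ge0 => i _; exact: fA1_ge0.
have G0 : 0 <= G b by apply: sumr_ge0 => i _; exact: fA2_ge0.
have [Gz|Gnz] := eqVneq (G b) 0.
  have kz : k = 0.
    apply/eqP; rewrite eq_le k0 andbT.
    by rewrite -(pmulr_rle0 _ mb0) -Gz.
  apply: le_ereal_sup_tmp.
  set s := (u - 1) / 2.
  have hs : 0 < s <= u - 1 by rewrite /s; apply/andP; split; lr.
  have hs' : 0 <= s <= u - 1 by lr.
  exists (eratio (sc (pf b s) (q1 alpha) A1)
    (Num.min (sc (pf b s) (q1 alpha) A1) (sc (pf b s) (q1 alpha) A2))).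
    by exists (pf b s), (q1 alpha); split => //; apply: pf_cons.
  rewrite scpfA1 // scpfA2 // kz !mulr0 !addr0 Gz.
  rewrite (min_r F0).
  by move: hr; rewrite Gz => /ltW.
have Gpos : 0 < G b by rewrite lt_def Gnz G0.
move: hr; rewrite /eratio (negbTE Gnz) lte_fin ltr_pdivlMr // => hr.
set d := F b - r * G b.
have d0 : 0 < d by rewrite /d subr_gt0.
have r0 : 0 < 2 * (1 + r) * (k + 1) by apply: mulr_gt0; lr.
set s := Num.min ((u - 1) / 2) (d / (2 * (1 + r) * (k + 1))).
have s1 : s <= (u - 1) / 2 by rewrite /s ge_min lexx.
have s2 : s <= d / (2 * (1 + r) * (k + 1)) by rewrite /s ge_min lexx orbT.
have spos : 0 < s.
  rewrite /s lt_min; apply/andP; split; first lr.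
  exact: divr_gt0.
have hs : 0 < s <= u - 1 by apply/andP; split; lr.
have hs' : 0 <= s <= u - 1 by lr.
apply: le_ereal_sup_tmp.
exists (eratio (sc (pf b s) (q1 alpha) A1)
  (Num.min (sc (pf b s) (q1 alpha) A1) (sc (pf b s) (q1 alpha) A2))).
  by exists (pf b s), (q1 alpha); split => //; apply: pf_cons.
rewrite scpfA1 // scpfA2 //.
have hsb : - (s * k) <= sb b s * k.
  rewrite /sb; case: (b); first by rewrite mulNr.
  have : 0 <= s * k by apply: mulr_ge0; lr.
  lr.
move: s2; rewrite ler_pdivlMr // => s2.
have rs : 0 <= r * s by apply: mulr_ge0; lr.
have rsk : 0 <= r * s * k by apply: mulr_ge0; lr.
have sk : 0 <= s * k by apply: mulr_ge0; lr.
have A2pos : 0 < G b + s * k by lr.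
have main : r * (G b + s * k) < F b + sb b s * k.
  rewrite /d in s2. lr.
have A2le : G b + s * k <= r * (G b + s * k).
  have : 0 <= (r - 1) * (G b + s * k) by apply: mulr_ge0; lr.
  lr.
rewrite (min_r (ltW (le_lt_trans A2le main))).
rewrite /eratio (gt_eqF A2pos) lee_fin ler_pdivlMr //.
exact: ltW.
Qed.

Lemma main_eq :
  dist_euclid alpha sigma A1 =
  Order.max
    (eratio (sc (p1 alpha sigma) (q1 alpha) A1) (sc (p1 alpha sigma) (q1 alpha) A2))
    (Order.max
      (eratio (sc (p2 alpha sigma) (q2 alpha) A1) (sc (p2 alpha sigma) (q2 alpha) A2))
      1%E).
Proof.
rewrite scp1A1 scp1A2 scp2A1 scp2A2.
apply/eqP; rewrite eq_le; apply/andP; split.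
  apply: ge_ereal_sup => y [p [q [hc ->]]]; exact: ub.
by rewrite !ge_max !lb_b lb_one.
Qed.

End Main.

Theorem lemma5 (R : realType) (n : nat) (alpha : R) (sigma : 'I_n -> report)
    (halpha : 0 < alpha < 1) :
  dist_euclid alpha sigma A1 =
  Order.max
    (eratio (sc (p1 alpha sigma) (q1 alpha) A1) (sc (p1 alpha sigma) (q1 alpha) A2))
    (Order.max
      (eratio (sc (p2 alpha sigma) (q2 alpha) A1) (sc (p2 alpha sigma) (q2 alpha) A2))
      1%E).
Proof.
case/andP: halpha => h0 h1.
exact: main_eq.
Qed.
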